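(* For a negative game $A$, let $!A$ be the infinitary parallel composition of countably many copies of $A$, i.e. the event structure whose events are the pairs $(i,a)$ with $i \in \omega$ and $a \in A$, with causal order, conflict and polarity inherited componentwise from $A$ (and no causality or conflict between distinct copies). Equip $!A$ with the groups \begin{align*} \mathcal{N}_{!A} &= \{ (\pi, (\alpha_i)_{i\in \omega}) \mid \pi \text{ is a permutation of $\omega$, and } \alpha_i \in \mathcal{N}_A \text{ for all }i \in \omega \} \\ \mathcal{P}_{!A} &= \{ (\alpha_i)_{i \in \omega} \mid \alpha_i \in \mathcal{P}_A \text{ for all }i \in \omega \} \end{align*} under componentwise multiplication, with actions on $!A$ defined by \begin{align*} \mathit{act}_{\mathcal{N}}((\pi, (\alpha_i)_{i\in \omega}), (i, a)) &= (\pi(i), \alpha_i(a)) \\ \mathit{act}_{\mathcal{P}}((\alpha_i)_{i\in \omega}, (i, a)) &= (i, \alpha_i(a)) \end{align*} and distributive law \begin{align*} \lambda_{!A} : \mathcal{N}_{!A} \times \mathcal{P}_{!A} &\longrightarrow \mathcal{P}_{!A} \times \mathcal{N}_{!A} \\ ((\pi, (\alpha_i)_{i \in \omega}), (\beta_i)_{i \in \omega}) &\longmapsto \left(\left(\beta'_{\pi^{-1}(i)}\right)_{i \in \omega}, (\pi, (\alpha'_i)_{i \in \omega})\right) \end{align*} where for every $i \in \omega$, $(\beta'_i, \alpha'_i) = \lambda_A(\alpha_i, \beta_i).$ This satisfies the axioms for a game.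
   Context: An event structure (with polarity) is a partial order $(A,\leq)$ with finitely many predecessors for each element, a polarity function $A \to \{-,+\}$, and an irreflexive symmetric hereditary conflict relation. An automorphism $\alpha$ of $A$ is negative if whenever $\alpha$ fixes a configuration $x$ and $x \subseteq^+ y$ (extension by positive events only) then $\alpha$ fixes $y$; positive is defined dually with $\subseteq^-$. A game is an event structure $A$ equipped with a group $\mathcal{N}_A$ with a negative left action $\mathit{act}_{\mathcal{N}}$ on $A$, a group $\mathcal{P}_A$ with a positive left action $\mathit{act}_{\mathcal{P}}$ on $A$, and a distributive law $\lambda_A : \mathcal{N}_A \times \mathcal{P}_A \to \mathcal{P}_A \times \mathcal{N}_A$ between the monads $\mathcal{N}_A \times (-)$ and $\mathcal{P}_A \times (-)$ on Set, such that acting by $\beta$ then by $\alpha$ equals acting by the result of applying $\lambda_A$ to $(\alpha,\beta)$ (i.e. the two actions are permuted by $\lambda_A$). A game is negative if all its initial (minimal) moves are negative. $!A$ denotes the resource modality (exponential). *)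

(* Defs.v *)
From Stdlib Require Import List.
Import ListNotations.


Inductive pol := Neg | Pos.

Record esd := {
  ev : Type;
  leq : ev -> ev -> Prop;
  polarity : ev -> pol;
  conf : ev -> ev -> Prop }.

Definition is_es (E : esd) : Prop :=
  (forall e, leq E e e) /\
  (forall e1 e2 e3, leq E e1 e2 -> leq E e2 e3 -> leq E e1 e3) /\
  (forall e1 e2, leq E e1 e2 -> leq E e2 e1 -> e1 = e2) /\
  (forall e, exists l : list (ev E), forall e', leq E e' e -> In e' l) /\
  (forall e, ~ conf E e e) /\
  (forall e1 e2, conf E e1 e2 -> conf E e2 e1) /\
  (forall e1 e2 e3, conf E e1 e2 -> leq E e2 e3 -> conf E e1 e3).

Definition config (E : esd) (x : ev E -> Prop) : Prop :=
  (exists l : list (ev E), forall e, x e -> In e l) /\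
  (forall e e', x e -> leq E e' e -> x e') /\
  (forall e e', x e -> x e' -> ~ conf E e e').

Definition ext_by (E : esd) (p : pol) (x y : ev E -> Prop) : Prop :=
  config E x /\ config E y /\ (forall e, x e -> y e) /\
  (forall e, y e -> ~ x e -> polarity E e = p).

Definition fixes (E : esd) (f : ev E -> ev E) (x : ev E -> Prop) : Prop :=
  forall e, x e -> f e = e.

Definition automorphism (E : esd) (f : ev E -> ev E) : Prop :=
  (forall e1 e2, f e1 = f e2 -> e1 = e2) /\
  (forall e, exists e', f e' = e) /\
  (forall e1 e2, leq E (f e1) (f e2) <-> leq E e1 e2) /\
  (forall e1 e2, conf E (f e1) (f e2) <-> conf E e1 e2) /\
  (forall e, polarity E (f e) = polarity E e).

Definition negative_auto (E : esd) (f : ev E -> ev E) : Prop :=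
  forall x y, config E x -> fixes E f x -> ext_by E Pos x y -> fixes E f y.

Definition positive_auto (E : esd) (f : ev E -> ev E) : Prop :=
  forall x y, config E x -> fixes E f x -> ext_by E Neg x y -> fixes E f y.

Record grp := {
  gcar : Type;
  gmul : gcar -> gcar -> gcar;
  gone : gcar;
  ginv : gcar -> gcar }.

Definition is_group (G : grp) : Prop :=
  (forall a b c, gmul G a (gmul G b c) = gmul G (gmul G a b) c) /\
  (forall a, gmul G (gone G) a = a) /\
  (forall a, gmul G a (gone G) = a) /\
  (forall a, gmul G (ginv G a) a = gone G) /\
  (forall a, gmul G a (ginv G a) = gone G).

Definition is_left_action (G : grp) (E : esd) (act : gcar G -> ev E -> ev E)
  (good : (ev E -> ev E) -> Prop) : Prop :=
  (forall e, act (gone G) e = e) /\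
  (forall g h e, act (gmul G g h) e = act g (act h e)) /\
  (forall g, automorphism E (act g)) /\
  (forall g, good (act g)).

Record game := {
  gE : esd;
  gN : grp;
  gP : grp;
  actN : gcar gN -> ev gE -> ev gE;
  actP : gcar gP -> ev gE -> ev gE;
  lam : gcar gN -> gcar gP -> gcar gP * gcar gN }.

(** Distributive law  N x (P x -) => P x (N x -)  between the writer monads
    N x (-) and P x (-) on Set; by naturality it is given by a function
    lam : N x P -> P x N, and the four distributive-law axioms read: *)
Definition is_distr_law (N P : grp) (l : gcar N -> gcar P -> gcar P * gcar N)
  : Prop :=
  (forall n, l n (gone P) = (gone P, n)) /\
  (forall p, l (gone N) p = (p, gone N)) /\
  (forall n1 n2 p,
     l (gmul N n1 n2) p =
     let (p1, n2') := l n2 p in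
     let (p2, n1') := l n1 p1 in (p2, gmul N n1' n2')) /\
  (forall n p1 p2,
     l n (gmul P p1 p2) =
     let (p1', n1) := l n p1 in
     let (p2', n2) := l n1 p2 in (gmul P p1' p2', n2)).

Definition is_game (G : game) : Prop :=
  is_es (gE G) /\
  is_group (gN G) /\ is_group (gP G) /\
  is_left_action (gN G) (gE G) (actN G) (negative_auto (gE G)) /\
  is_left_action (gP G) (gE G) (actP G) (positive_auto (gE G)) /\
  is_distr_law (gN G) (gP G) (lam G) /\
  (forall a b e,
     actN G a (actP G b e) = actP G (fst (lam G a b)) (actN G (snd (lam G a b)) e)).

Definition negative_game (G : game) : Prop :=
  forall e : ev (gE G),
    (forall e', leq (gE G) e' e -> e' = e) -> polarity (gE G) e = Neg.

Record perm := {
  pf : nat -> nat;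
  pb : nat -> nat;
  pfb : forall n, pf (pb n) = n;
  pbf : forall n, pb (pf n) = n }.

Definition perm_id : perm :=
  {| pf := fun n => n; pb := fun n => n;
     pfb := fun n => eq_refl; pbf := fun n => eq_refl |}.

Definition perm_comp (p q : perm) : perm.
Proof.
  refine {| pf := fun n => pf p (pf q n); pb := fun n => pb q (pb p n) |};
  intro n; [rewrite pfb, pfb | rewrite pbf, pbf]; reflexivity.
Defined.

Definition perm_inv (p : perm) : perm :=
  {| pf := pb p; pb := pf p; pfb := pbf p; pbf := pfb p |}.

Definition bang_es (E : esd) : esd :=
  {| ev := (nat * ev E)%type;
     leq := fun x y => fst x = fst y /\ leq E (snd x) (snd y);
     polarity := fun x => polarity E (snd x);
     conf := fun x y => fst x = fst y /\ conf E (snd x) (snd y) |}.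

(** N_{!A}: pairs (π, (α_i)_i); the product making act_N a left action is
    (π,α)(π',α') = (π∘π', (α_{π'(i)} α'_i)_i)  (wreath product). *)
Definition bang_N (N : grp) : grp :=
  {| gcar := (perm * (nat -> gcar N))%type;
     gmul := fun x y =>
       (perm_comp (fst x) (fst y),
        fun i => gmul N (snd x (pf (fst y) i)) (snd y i));
     gone := (perm_id, fun _ => gone N);
     ginv := fun x =>
       (perm_inv (fst x), fun i => ginv N (snd x (pb (fst x) i))) |}.

Definition bang_P (P : grp) : grp :=
  {| gcar := nat -> gcar P;
     gmul := fun x y i => gmul P (x i) (y i);
     gone := fun _ => gone P;
     ginv := fun x i => ginv P (x i) |}.

Definition bang (A : game) : game :=
  {| gE := bang_es (gE A);
     gN := bang_N (gN A);
     gP := bang_P (gP A);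
     actN := fun g (x : nat * ev (gE A)) =>
               (pf (fst g) (fst x), actN A (snd g (fst x)) (snd x));
     actP := fun b (x : nat * ev (gE A)) =>
               (fst x, actP A (b (fst x)) (snd x));
     lam := fun g (b : nat -> gcar (gP A)) =>
       ((fun i => fst (lam A (snd g (pb (fst g) i)) (b (pb (fst g) i)))),
        (fst g, fun i => snd (lam A (snd g i) (b i)))) |}.

(* Main.v *)
Require Import Defs.
From Stdlib Require Import List Lia Classical ClassicalEpsilon FunctionalExtensionality ProofIrrelevance.
Import ListNotations.

Lemma perm_eq (p q : perm) :
  (forall n, pf p n = pf q n) -> (forall n, pb p n = pb q n) -> p = q.
Proof.
  destruct p as [f b fb bf], q as [f' b' fb' bf']; simpl; intros H1 H2.
  assert (f = f') by (apply functional_extensionality; auto).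
  assert (b = b') by (apply functional_extensionality; auto).
  subst. f_equal; apply proof_irrelevance.
Qed.

Lemma exists_min (E : esd) : is_es E -> forall a,
  exists a0, leq E a0 a /\ (forall e', leq E e' a0 -> e' = a0).
Proof.
  intros (Hr & Ht & Ha & Hf & _).
  assert (Hdec : forall x y : ev E, {x = y} + {x <> y})
    by (intros; apply excluded_middle_informative).
  assert (K : forall n a (l : list (ev E)), length l <= n ->
     (forall e', leq E e' a -> In e' l) ->
     exists a0, leq E a0 a /\ (forall e', leq E e' a0 -> e' = a0)).
  { induction n; intros a l Hl Hin.
    - destruct l; [|simpl in Hl; lia]. exfalso; exact (Hin a (Hr a)).
    - destruct (classic (forall e', leq E e' a -> e' = a)) as [Hm|Hm].
      + exists a; split; auto.
      + apply not_all_ex_not in Hm; destruct Hm as [b Hb].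
        apply imply_to_and in Hb; destruct Hb as [Hba Hne].
        destruct (IHn b (remove Hdec a l)) as [a0 [H1 H2]].
        * pose proof (remove_length_lt Hdec l a (Hin a (Hr a))). lia.
        * intros e' He'. apply in_in_remove.
          -- intro Heq; rewrite Heq in He'. apply Hne, Ha; auto.
          -- apply Hin; eauto.
        * exists a0; split; eauto. }
  intros a; destruct (Hf a) as [l Hl]; eapply K; eauto.
Qed.

Lemma config_slice (E : esd) (x : ev (bang_es E) -> Prop) i :
  config (bang_es E) x -> config E (fun b => x (i, b)).
Proof.
  intros [[l Hl] [Hd Hc]]. split; [|split].
  - exists (map snd l). intros e He. exact (in_map snd l (i,e) (Hl _ He)).
  - intros e e' He Hle. apply (Hd (i,e)); simpl; auto.
  - intros e e' He He' C. apply (Hc _ _ He He'); simpl; auto.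
Qed.

Lemma ext_slice (E : esd) q (x y : ev (bang_es E) -> Prop) i :
  ext_by (bang_es E) q x y -> ext_by E q (fun b => x (i, b)) (fun b => y (i, b)).
Proof.
  intros [Hx [Hy [Hxy Hp]]]. split; [|split; [|split]].
  - apply config_slice; auto.
  - apply config_slice; auto.
  - intros e He; apply (Hxy (i,e)); auto.
  - intros e He Hn; apply (Hp (i,e)); auto.
Qed.

Ltac destr_lam A :=
  repeat match goal with |- context [lam A ?a ?b] =>
    lazymatch a with context [lam A _ _] => fail | _ =>
    lazymatch b with context [lam A _ _] => fail | _ =>
      destruct (lam A a b); cbn end end end.

Theorem mainTheorem3 (A : game) :
  is_game A -> negative_game A -> is_game (bang A).
Proof.
  intros [HesA [HgN [HgP [HactN [HactP [Hdl Hcomm]]]]]] Hneg.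
  pose proof HesA as (Hr & Ht & Ha & Hf & Hci & Hcs & Hch).
  split; [|split; [|split; [|split; [|split; [|split]]]]].
  - unfold is_es; simpl. split; [|split; [|split; [|split; [|split; [|split]]]]].
    + intros [i a]; simpl; auto.
    + intros [i1 a1] [i2 a2] [i3 a3] [E1 L1] [E2 L2]; simpl in *; split; [congruence| eauto].
    + intros [i1 a1] [i2 a2] [E1 L1] [E2 L2]; simpl in *; f_equal; auto.
    + intros [i a]; destruct (Hf a) as [l Hl]; exists (map (fun b => (i,b)) l).
      intros [j b] [E L]; simpl in *; subst; apply in_map; auto.
    + intros [i a] [_ C]; eapply Hci; eauto.
    + intros [i1 a1] [i2 a2] [E C]; simpl in *; split; auto.
    + intros [i1 a1] [i2 a2] [i3 a3] [E C] [E' L]; simpl in *; split; [congruence| eauto].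
  - destruct HgN as (Nas & Nl & Nr & Nvl & Nvr). unfold is_group; simpl.
    split; [|split; [|split; [|split]]].
    + intros [p1 f1] [p2 f2] [p3 f3]; simpl; f_equal.
      * apply perm_eq; reflexivity.
      * apply functional_extensionality; intro i; apply Nas.
    + intros [p f]; simpl; f_equal; [apply perm_eq; reflexivity
        | apply functional_extensionality; intro; apply Nl].
    + intros [p f]; simpl; f_equal; [apply perm_eq; reflexivity
        | apply functional_extensionality; intro; apply Nr].
    + intros [p f]; simpl; f_equal.
      * apply perm_eq; intro; simpl; apply pbf.
      * apply functional_extensionality; intro i; simpl; rewrite pbf; apply Nvl.
    + intros [p f]; simpl; f_equal.
      * apply perm_eq; intro; simpl; apply pfb.
      * apply functional_extensionality; intro i; simpl; apply Nvr.
  - destruct HgP as (Pas & Pl & Pr & Pvl & Pvr). unfold is_group; simpl.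
    split; [|split; [|split; [|split]]]; intros;
      apply functional_extensionality; intros; auto.
  - destruct HactN as (N1 & N2 & N3 & N4).
    split; [|split; [|split]].
    + intros [i a]; simpl; rewrite N1; reflexivity.
    + intros [p f] [q g] [i a]; simpl; rewrite N2; reflexivity.
    + intros [p f]. split; [|split; [|split; [|split]]].
      * intros [i1 a1] [i2 a2] H; simpl in H; injection H as E1 E2.
        assert (i1 = i2) by (rewrite <- (pbf p i1), <- (pbf p i2), E1; reflexivity).
        subst. destruct (N3 (f i2)) as [Inj _]. f_equal; apply Inj; auto.
      * intros [j b]; destruct (N3 (f (pb p j))) as [_ [Sur _]].
        destruct (Sur b) as [a Ha']; exists (pb p j, a); simpl; rewrite pfb, Ha'; reflexivity.
      * intros [i1 a1] [i2 a2]; simpl; split; intros [E L].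
        -- assert (i1 = i2) by (rewrite <- (pbf p i1), <- (pbf p i2), E; reflexivity).
           subst; split; auto; apply (N3 (f i2)); auto.
        -- subst; split; auto; apply (N3 (f i2)); auto.
      * intros [i1 a1] [i2 a2]; simpl; split; intros [E L].
        -- assert (i1 = i2) by (rewrite <- (pbf p i1), <- (pbf p i2), E; reflexivity).
           subst; split; auto; apply (N3 (f i2)); auto.
        -- subst; split; auto; apply (N3 (f i2)); auto.
      * intros [i a]; simpl; apply N3.
    + intros [p f] x y Hx Hfix Hext [i a] Hyia.
      pose proof Hext as [_ [Hy [Hxy Hpol]]].
      destruct (exists_min _ HesA a) as [a0 [Ha0 Hmin]].
      assert (Hy0 : y (i,a0)) by (destruct Hy as [_ [Hdc _]]; apply (Hdc (i,a)); simpl; auto).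
      assert (Hx0 : x (i,a0)).
      { destruct (classic (x (i,a0))) as [?|Hn]; auto. exfalso.
        pose proof (Hpol _ Hy0 Hn) as P. simpl in P. rewrite (Hneg a0 Hmin) in P. discriminate. }
      pose proof (Hfix _ Hx0) as F0. simpl in F0. injection F0 as Fi Fa.
      assert (Hfa : actN A (f i) a = a).
      { apply (N4 (f i) (fun b => x (i,b)) (fun b => y (i,b))).
        - apply config_slice; auto.
        - intros c Hc. pose proof (Hfix _ Hc) as F. simpl in F. injection F; auto.
        - apply ext_slice; auto.
        - auto. }
      simpl. rewrite Fi, Hfa. reflexivity.
  - destruct HactP as (P1 & P2 & P3 & P4).
    split; [|split; [|split]].
    + intros [i a]; simpl; rewrite P1; reflexivity.
    + intros g h [i a]; simpl; rewrite P2; reflexivity.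
    + intros g. split; [|split; [|split; [|split]]].
      * intros [i1 a1] [i2 a2] H; simpl in H; injection H as E1 E2.
        subst. destruct (P3 (g i2)) as [Inj _]. f_equal; apply Inj; auto.
      * intros [j b]; destruct (P3 (g j)) as [_ [Sur _]].
        destruct (Sur b) as [a Ha']; exists (j, a); simpl; rewrite Ha'; reflexivity.
      * intros [i1 a1] [i2 a2]; simpl; split; intros [E L]; simpl in E;
          subst; split; auto; apply (P3 (g i2)); auto.
      * intros [i1 a1] [i2 a2]; simpl; split; intros [E L]; simpl in E;
          subst; split; auto; apply (P3 (g i2)); auto.
      * intros [i a]; simpl; apply P3.
    + intros g x y Hx Hfix Hext [i a] Hyia.
      assert (Hfa : actP A (g i) a = a).
      { apply (P4 (g i) (fun b => x (i,b)) (fun b => y (i,b))).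
        - apply config_slice; auto.
        - intros c Hc. pose proof (Hfix _ Hc) as F. simpl in F. injection F; auto.
        - apply ext_slice; auto.
        - auto. }
      simpl. rewrite Hfa. reflexivity.
  - destruct Hdl as (D1 & D2 & D3 & D4).
    split; [|split; [|split]].
    + intros [p f]; simpl. f_equal.
      * apply functional_extensionality; intro i; rewrite D1; reflexivity.
      * f_equal; apply functional_extensionality; intro i; rewrite D1; reflexivity.
    + intros q; simpl. f_equal.
      * apply functional_extensionality; intro i; rewrite D2; reflexivity.
      * f_equal; apply functional_extensionality; intro i; rewrite D2; reflexivity.
    + intros [p1 f1] [p2 f2] q; simpl. f_equal.
      * apply functional_extensionality; intro i; rewrite pfb, D3.
        destr_lam A; reflexivity.
      * f_equal; apply functional_extensionality; intro i; rewrite D3, pbf.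
        destr_lam A; reflexivity.
    + intros [p f] q1 q2; simpl. f_equal.
      * apply functional_extensionality; intro i; rewrite D4.
        destr_lam A; reflexivity.
      * f_equal; apply functional_extensionality; intro i; rewrite D4.
        destr_lam A; reflexivity.
  - intros [p f] b [i a]; simpl. rewrite pbf, Hcomm. reflexivity.
Qed.
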